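(* Let $X$ be a Banach space, $B$ a subset of $B_{X^{*}}$ that (I)-generates $B_{X^{*}}$, and $A=(a_{nk})_{n,k\in\mathbb{N}}$ a regular matrix. Let $(x_n)_{n\in\mathbb{N}}$ be a bounded sequence in $X$ and $x\in X$ such that $(x^{*}(x_n))_{n\in\mathbb{N}}$ is $F_A$-convergent to $x^{*}(x)$ for every $x^{*}\in B$. Then $(x^{*}(x_n))_{n\in\mathbb{N}}$ is $F_A$-convergent to $x^{*}(x)$ for every $x^{*}\in X^{*}$. In particular, if $X$ is a real Banach space, the same holds with $F_A$-convergence replaced by almost convergence.
   Context: A complex matrix $A=(a_{nk})$ is regular if $\sup_n\sum_k|a_{nk}|<\infty$, $\lim_n\sum_k a_{nk}=1$ and $\lim_n a_{nk}=0$ for all $k$. A bounded scalar sequence $(s_k)$ is $F_A$-convergent to $s$ if $\sum_{k=1}^\infty a_{nk}s_{k+l}\to s$ as $n\to\infty$, uniformly in $l\in\mathbb{N}_0$. A Banach limit is a linear functional $L:\ell^\infty\to\mathbb{R}$ (real $\ell^\infty$) with $L(1,1,\dots)=1$, $L(\mathbf{x})\ge0$ whenever $\mathbf{x}\ge0$, and $L(T\mathbf{x})=L(\mathbf{x})$ where $T$ is the left shift. A bounded real sequence is almost convergent to $s$ if $L((s_k))=s$ for every Banach limit $L$. A subset $B\subseteq B_{X^*}$ (I)-generates $B_{X^*}$ if whenever $B=\bigcup_{n=1}^\infty B_n$, $B_{X^*}$ equals the norm-closure of the convex hull of $\bigcup_n\overline{\mathrm{co}}^{w^*}(B_n)$ (weak*-closed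 convex hulls). *)

(* Defs.v *)
From HB Require Import structures.
From mathcomp Require Import all_boot all_order all_algebra.
From mathcomp Require Import all_classical all_reals all_analysis.
From mathcomp Require Export complex.
Set Implicit Arguments.
Unset Strict Implicit.
Unset Printing Implicit Defensive.
Import Order.TTheory GRing.Theory Num.Theory.
Import numFieldNormedType.Exports.
Local Open Scope classical_set_scope.
Local Open Scope ring_scope.

Definition bounded_scalar_seq {K : numDomainType} (s : nat -> K) : Prop :=
  exists M : K, forall k, `|s k| <= M.

Definition series_sums_to {K : numDomainType} (u : nat -> K) (sigma : K) : Prop :=
  forall e : K, 0 < e -> exists N : nat, forall m : nat, (N <= m)%N ->
    `|\sum_(k < m) u k - sigma| < e.

(* Regular (Silverman-Toeplitz) matrix A = (a_{nk}), indices from 0. *)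
Definition regular_matrix {K : numDomainType} (A : nat -> nat -> K) : Prop :=
  [/\
      (exists M : K, forall n m : nat, \sum_(k < m) `|A n k| <= M),
      (forall e : K, 0 < e -> exists N : nat, forall n : nat, (N <= n)%N ->
         exists sigma : K, series_sums_to (A n) sigma /\ `|sigma - 1| < e) &
      (forall k : nat, forall e : K, 0 < e -> exists N : nat, forall n : nat,
         (N <= n)%N -> `|A n k| < e)].

Definition FA_convergent {K : numDomainType} (A : nat -> nat -> K)
    (s : nat -> K) (t : K) : Prop :=
  bounded_scalar_seq s /\
  forall e : K, 0 < e -> exists N : nat, forall n : nat, (N <= n)%N ->
    forall l : nat, exists sigma : K,
      series_sums_to (fun k => A n k * s (k + l)%N) sigma /\ `|sigma - t| < e.

Definition bounded_real_seq {R : realType} (s : nat -> R) : Prop :=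
  exists M : R, forall k, `|s k| <= M.

(* L is a functional on l^infty (its values outside l^infty are irrelevant). *)
Definition BanachLimit {R : realType} (L : (nat -> R) -> R) : Prop :=
  [/\ (forall (a : R) (s u : nat -> R), bounded_real_seq s -> bounded_real_seq u ->
         L (fun k => a * s k + u k) = a * L s + L u),
      L (fun _ => 1) = 1,
      (forall s : nat -> R, bounded_real_seq s -> (forall k, 0 <= s k) -> 0 <= L s) &
      (forall s : nat -> R, bounded_real_seq s -> L (fun k => s k.+1) = L s)].

Definition almost_convergent {R : realType} (s : nat -> R) (t : R) : Prop :=
  bounded_real_seq s /\ forall L, BanachLimit L -> L s = t.

Section Dual.
Context {K : numFieldType} (X : normedModType K).

Definition bounded_X_seq (xs : nat -> X) : Prop :=
  exists M : K, forall n, `|xs n| <= M.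

Definition linear_functional (f : X -> K) : Prop :=
  forall (a : K) (u v : X), f (a *: u + v) = a * f u + f v.

Definition dual_space : set (X -> K) :=
  [set f | linear_functional f /\ exists M : K, forall u, `|f u| <= M * `|u|].

Definition dual_ball : set (X -> K) :=
  [set f | linear_functional f /\ forall u, `|f u| <= `|u|].

Definition conv_hull (S : set (X -> K)) : set (X -> K) :=
  [set g | exists (n : nat) (c : 'I_n -> K) (h : 'I_n -> X -> K),
     [/\ forall i, 0 <= c i, \sum_i c i = 1, forall i, S (h i) &
         g = fun u => \sum_i c i * h i u]].

(* closure in X^* for the weak* topology (pointwise convergence on X) *)
Definition wstar_closure (S : set (X -> K)) : set (X -> K) :=
  [set f | dual_space f /\
     forall (m : nat) (pts : 'I_m -> X) (e : K), 0 < e ->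
       exists g, S g /\ forall i, `|f (pts i) - g (pts i)| < e].

Definition wstar_closed_conv_hull (S : set (X -> K)) : set (X -> K) :=
  wstar_closure (conv_hull S).

Definition norm_closure (S : set (X -> K)) : set (X -> K) :=
  [set f | dual_space f /\
     forall e : K, 0 < e -> exists g, S g /\ forall u, `|f u - g u| <= e * `|u|].

Definition I_generates (B : set (X -> K)) : Prop :=
  forall Bn : nat -> set (X -> K), B = \bigcup_n Bn n ->
    dual_ball = norm_closure (conv_hull (\bigcup_n wstar_closed_conv_hull (Bn n))).

End Dual.

Arguments bounded_X_seq {K X}.
Arguments linear_functional {K X}.
Arguments dual_space {K} X.
Arguments dual_ball {K} X.
Arguments conv_hull {K X}.
Arguments wstar_closure {K X}.
Arguments wstar_closed_conv_hull {K X}.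
Arguments norm_closure {K X}.
Arguments I_generates {K X}.

(* Main.v *)
Require Import Defs.
From HB Require Import structures.
From mathcomp Require Import all_boot all_order all_algebra.
From mathcomp Require Import all_classical all_reals all_analysis.
From mathcomp Require Import complex.
From mathcomp Require Import lra ring.
Import Order.TTheory GRing.Theory Num.Theory.
Import numFieldNormedType.Exports.
Local Open Scope classical_set_scope.
Local Open Scope ring_scope.
Local Open Scope complex_scope.
Set Implicit Arguments.
Unset Strict Implicit.
Unset Printing Implicit Defensive.
Notation CRe := (@complex.Re _).
Notation CIm := (@complex.Im _).

Section GenSeries.
Variable K : numFieldType.
Implicit Types (u v : nat -> K) (a b c : K).

Lemma sums_ext u v a : (forall k, u k = v k) -> series_sums_to u a -> series_sums_to v a.
Proof.
move=> uv H e e0; have [N HN] := H e e0; exists N => m Hm.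
rewrite (eq_bigr (fun k => u (nat_of_ord k))); first exact: HN.
by move=> k _; rewrite uv.
Qed.

Lemma sums0 : series_sums_to (fun _ => 0 : K) 0.
Proof. by move=> e e0; exists 0%N => m _; rewrite big1 // subr0 normr0. Qed.

Lemma sumsD u v a b : series_sums_to u a -> series_sums_to v b ->
  series_sums_to (fun k => u k + v k) (a + b).
Proof.
move=> Hu Hv e e0.
have e2 : 0 < e / 2 by rewrite divr_gt0.
have [N1 H1] := Hu _ e2; have [N2 H2] := Hv _ e2.
exists (maxn N1 N2) => m; rewrite geq_max => /andP[m1 m2].
rewrite big_split /= (_ : _ - _ = (\sum_(k < m) u k - a) + (\sum_(k < m) v k - b)); last first.
  by rewrite opprD !addrA; congr (_ + _); rewrite -!addrA; congr (_ + _); rewrite addrC.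
rewrite (splitr e); apply: (le_lt_trans (ler_normD _ _)).
by apply: ltrD; [exact: H1 | exact: H2].
Qed.

Lemma sumsZ u a c : series_sums_to u a -> series_sums_to (fun k => c * u k) (c * a).
Proof.
move=> Hu e e0.
have c1 : 0 < `|c| + 1 by rewrite ltr_wpDl.
have e' : 0 < e / (`|c| + 1) by rewrite divr_gt0.
have [N HN] := Hu _ e'; exists N => m /HN h.
rewrite -mulr_sumr -mulrBr normrM.
apply: (le_lt_trans (ler_wpM2l (normr_ge0 _) (ltW h))).
by rewrite mulrA ltr_pdivrMr // mulrDr mulr1 mulrC ltrDl.
Qed.

Lemma sumsN u a : series_sums_to u a -> series_sums_to (fun k => - u k) (- a).
Proof.
move=> H; apply: (@sums_ext (fun k => -1 * u k)); first by move=> k; rewrite mulN1r.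
by rewrite -(mulN1r a); exact: sumsZ.
Qed.

Lemma sums_big (I : Type) (r : seq I) (U : I -> nat -> K) (s : I -> K) :
  (forall i, series_sums_to (U i) (s i)) ->
  series_sums_to (fun k => \sum_(i <- r) U i k) (\sum_(i <- r) s i).
Proof.
move=> H; elim: r => [|i r IH].
  by rewrite big_nil; apply: sums_ext sums0 => k; rewrite big_nil.
rewrite big_cons; apply: sums_ext (sumsD (H i) IH) => k; by rewrite big_cons.
Qed.

End GenSeries.

Section CFacts.
Variable R : realType.
Local Notation C := R[i].

Lemma ReD (x y : C) : CRe (x + y) = CRe x + CRe y.
Proof. by case: x; case: y. Qed.
Lemma ImD (x y : C) : CIm (x + y) = CIm x + CIm y.
Proof. by case: x; case: y. Qed.
Lemma ReN (x : C) : CRe (- x) = - CRe x.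
Proof. by case: x. Qed.
Lemma ImN (x : C) : CIm (- x) = - CIm x.
Proof. by case: x. Qed.
Lemma ReB (x y : C) : CRe (x - y) = CRe x - CRe y.
Proof. by rewrite ReD ReN. Qed.
Lemma ImB (x y : C) : CIm (x - y) = CIm x - CIm y.
Proof. by rewrite ImD ImN. Qed.
Lemma Re_sum (n : nat) (F : 'I_n -> C) : CRe (\sum_(i < n) F i) = \sum_(i < n) CRe (F i).
Proof. by rewrite (big_morph (@complex.Re R) ReD (erefl : CRe (0:C) = 0)). Qed.
Lemma Im_sum (n : nat) (F : 'I_n -> C) : CIm (\sum_(i < n) F i) = \sum_(i < n) CIm (F i).
Proof. by rewrite (big_morph (@complex.Im R) ImD (erefl : CIm (0:C) = 0)). Qed.

Lemma normC_real (r : R) : `|r%:C| = `|r|%:C.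
Proof. by rewrite normc_def /= expr0n /= addr0 sqrtr_sqr. Qed.

Lemma ge0_real (c : C) : 0 <= c -> c = (CRe c)%:C.
Proof. by case: c => a b; rewrite lecE /= => /andP[/eqP -> _]. Qed.

Lemma gt0_real (c : C) : 0 < c -> c = (CRe c)%:C /\ 0 < CRe c.
Proof. by case: c => a b; rewrite ltcE /= => /andP[/eqP -> ->]. Qed.

Lemma Re_le (x y : C) : x <= y -> CRe x <= CRe y.
Proof. by rewrite lecE => /andP[]. Qed.

Lemma norm_RI (z : C) : `|z| <= (`|CRe z| + `|CIm z|)%:C.
Proof.
rewrite {1}[z]complexE rmorphD /=; apply: (le_trans (ler_normD _ _)).
by rewrite normrM normC_real normC_real (_ : `|'i| = 1) ?mul1r //
  normc_def /= expr0n expr1n add0r sqrtr1.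
Qed.
End CFacts.

Section CSeries.
Variable R : realType.
Local Notation C := R[i].

Lemma tail_small (a : nat -> C) (Ma : C) :
  (forall m, \sum_(k < m) `|a k| <= Ma) -> forall eta : C, 0 < eta ->
  exists Kt, forall K', (Kt <= K')%N ->
    \sum_(k < K') `|a k| - \sum_(k < Kt) `|a k| <= eta.
Proof.
move=> HM eta eta0.
pose t := fun m => CRe (\sum_(k < m) `|a k|).
have tE m : \sum_(k < m) `|a k| = (t m)%:C by apply: ge0_real; rewrite sumr_ge0.
have hs : has_sup (range t).
  split; first by exists (t 0%N), 0%N.
  by exists (CRe Ma) => _ [m _ <-]; apply: Re_le; exact: HM.
have [etaE eta0'] := gt0_real eta0.
have [_ [Kt _ <-] hKt] := sup_adherent eta0' hs.
exists Kt => K' hK.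
have hK' : t K' <= sup (range t) by apply: sup_upper_bound => //; exists K'.
rewrite !tE -rmorphB etaE lecR; lra.
Qed.
End CSeries.

Section CSeries2.
Variable R : realType.
Local Notation C := R[i].

Lemma sum_exists (a s : nat -> C) (Ma Ms : C) :
  (forall m, \sum_(k < m) `|a k| <= Ma) -> (forall k, `|s k| <= Ms) ->
  exists sigma, series_sums_to (fun k => a k * s k) sigma.
Proof.
move=> Ha Hs.
pose u k := a k * s k.
have Ms0 : 0 <= Ms := le_trans (normr_ge0 _) (Hs 0%N).
have bnd m : \sum_(k < m) `|u k| <= Ma * Ms.
  apply: (@le_trans _ _ (\sum_(k < m) `|a k| * Ms)).
    by apply: ler_sum => k _; rewrite normrM ler_wpM2l.
  by rewrite -mulr_suml ler_wpM2r.
have cv (f : C -> R) : (forall z, (`|f z|)%:C <= `|z|) -> cvgn (series (fun k => f (u k))).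
  move=> fz; apply: normed_cvg; apply: nondecreasing_is_cvgn.
    move=> n m nm; rewrite /= /series /=.
    by apply: (@nondecreasing_series _ (fun k => `|f (u k)|) xpredT 0%N) => // ? _ _.
  exists (CRe (Ma * Ms)) => _ [n _ <-].
  have h : (\sum_(0 <= k < n) `|f (u k)|)%:C <= Ma * Ms.
    rewrite rmorph_sum big_mkord /=; apply: le_trans (bnd n).
    by apply: ler_sum => k _; exact: fz.
  exact: (Re_le h).
have cr := cv _ (@normc_ge_Re R).
have ci : cvgn (series (fun k => CIm (u k))).
  apply: cv => z; have := normc_ge_Re (z * 'i).
  by rewrite ReiNIm normrN normrM (_ : `|'i| = 1) ?mulr1 // normc_def /= expr0n expr1n add0r sqrtr1.
have /cvgrPdist_lt hr := cr.
have /cvgrPdist_lt hi := ci.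
exists (Complex (limn (series (fun k => CRe (u k)))) (limn (series (fun k => CIm (u k))))).
move=> e /gt0_real [eE e0].
have e2 : 0 < CRe e / 2 by rewrite divr_gt0.
have [N1 _ H1] := hr _ e2.
have [N2 _ H2] := hi _ e2.
exists (maxn N1 N2) => m; rewrite geq_max => /andP[m1 m2].
apply: (le_lt_trans (norm_RI _)); rewrite eE ltcR.
have := H1 m m1; have := H2 m m2.
rewrite /series /= !big_mkord ReB ImB Re_sum Im_sum /= => h2 h1.
rewrite (splitr (CRe e)); apply: ltrD; by rewrite distrC.
Qed.
End CSeries2.

Section LinF.
Variables (K : numFieldType) (X : normedModType K).

Lemma lin0 (f : X -> K) : linear_functional f -> f 0 = 0.
Proof.
move=> lf; have := lf 1 0 0; rewrite scale1r addr0 mul1r => h.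
by apply/esym/(@addrI _ (f 0)); rewrite addr0.
Qed.

Lemma linZ (f : X -> K) a u : linear_functional f -> f (a *: u) = a * f u.
Proof. by move=> lf; have := lf a u 0; rewrite addr0 lin0 // addr0. Qed.

Lemma linD (f : X -> K) u v : linear_functional f -> f (u + v) = f u + f v.
Proof. by move=> lf; have := lf 1 u v; rewrite scale1r mul1r. Qed.

Lemma linB (f : X -> K) u v : linear_functional f -> f (u - v) = f u - f v.
Proof.
move=> lf; rewrite linD // -scaleN1r linZ //; by rewrite mulN1r.
Qed.

Lemma lin_comb n (c : 'I_n -> K) (h : 'I_n -> X -> K) :
  (forall i, linear_functional (h i)) ->
  linear_functional (fun u => \sum_i c i * h i u).
Proof.
move=> lh a u v; rewrite mulr_sumr -big_split /=; apply: eq_bigr => i _.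
by rewrite lh mulrDr mulrCA.
Qed.

Lemma conv_ball S : S `<=` dual_ball X -> conv_hull S `<=` dual_ball X.
Proof.
move=> SB g [n [c [h [c0 c1 hS ->]]]]; split.
  by apply: lin_comb => i; have [] := SB _ (hS i).
move=> u; apply: (le_trans (ler_norm_sum _ _ _)).
apply: (@le_trans _ _ (\sum_i c i * `|u|)); last by rewrite -mulr_suml c1 mul1r.
apply: ler_sum => i _; rewrite normrM ger0_norm // ler_wpM2l //.
by have [] := SB _ (hS i).
Qed.
End LinF.

Lemma small_frac (F : numFieldType) (c e : F) : 0 <= c -> 0 < e ->
  0 < e / (c + 1) /\ c * (e / (c + 1)) <= e.
Proof.
move=> c0 e0; have c1 : 0 < c + 1 by rewrite ltr_wpDl.
split; first by rewrite divr_gt0.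
by rewrite mulrA ler_pdivrMr // mulrDr mulr1 mulrC lerDl ltW.
Qed.

Lemma psum_mono (F : numDomainType) (G : nat -> F) m n : (forall k, 0 <= G k) -> (m <= n)%N ->
  \sum_(k < m) G k <= \sum_(k < n) G k.
Proof.
move=> G0 mn; rewrite -!(big_mkord xpredT) (@big_cat_nat _ _ _ m 0 n _ _ (leq0n m) mn) /= lerDl.
by rewrite sumr_ge0.
Qed.

Lemma sum_diff (F : zmodType) (G : nat -> F) m n : (m <= n)%N ->
  \sum_(k < n) G k - \sum_(k < m) G k = \sum_(m <= k < n) G k.
Proof.
move=> mn; rewrite -!(big_mkord xpredT) (@big_cat_nat _ _ _ m 0 n _ _ (leq0n m) mn) /=.
by rewrite addrAC subrr add0r.
Qed.

Lemma norm5 (F : numDomainType) (x1 x2 x3 x4 x5 : F) :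
  `|x1 + x2 + x3 + x4 + x5| <= `|x1| + `|x2| + `|x3| + `|x4| + `|x5|.
Proof.
apply: (le_trans (ler_normD _ _)); rewrite lerD2r.
apply: (le_trans (ler_normD _ _)); rewrite lerD2r.
apply: (le_trans (ler_normD _ _)); rewrite lerD2r.
exact: ler_normD.
Qed.

Section Core.
Variable R : realType.
Local Notation C := R[i].
Variables (K : numFieldType) (X : normedModType K) (iota : {rmorphism K -> C}).
Hypothesis iota_norm : forall a : K, `|iota a| = iota `|a|.
Hypothesis iota_le : forall a b : K, a <= b -> iota a <= iota b.
Hypothesis iota_small : forall e : C, 0 < e -> exists2 d : K, 0 < d & iota d <= e.
Variables (A : nat -> nat -> C) (Ma : C) (y : nat -> X) (My : K).
Hypothesis HA1 : forall n m, \sum_(k < m) `|A n k| <= Ma.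
Hypothesis Hy : forall k, `|y k| <= My.

Lemma Ma0 : 0 <= Ma.
Proof. by have := HA1 0 0; rewrite big_ord0. Qed.
Lemma My0 : 0 <= My.
Proof. exact: le_trans (normr_ge0 _) (Hy 0). Qed.

Lemma iota_ge0 a : 0 <= a -> 0 <= iota a.
Proof. by move=> /iota_le; rewrite rmorph0. Qed.

Definition Cset (b : C) (m : nat) : set (X -> K) :=
  [set f | linear_functional f /\ forall n, (m <= n)%N -> forall l, exists sigma,
     series_sums_to (fun k => A n k * iota (f (y (k + l)))) sigma /\ `|sigma| <= b].

Lemma Cset_mono b b' m m' : b <= b' -> (m <= m')%N -> Cset b m `<=` Cset b' m'.
Proof.
move=> bb mm f [lf H]; split => // n mn l.
have [s [Hs Hb]] := H n (leq_trans mm mn) l.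
by exists s; split => //; apply: le_trans bb.
Qed.

Lemma conv_Cset b m S : S `<=` Cset b m -> conv_hull S `<=` Cset b m.
Proof.
move=> SC g [N [c [h [c0 c1 hS ->]]]]; split.
  by apply: lin_comb => i; have [] := SC _ (hS i).
move=> n mn l.
have : forall i, exists s, series_sums_to (fun k => A n k * iota (h i (y (k + l)))) s /\ `|s| <= b.
  by move=> i; have [_ H] := SC _ (hS i); exact: H.
move=> /fin_all_exists [s Hs].
exists (\sum_i iota (c i) * s i); split.
  apply: (sums_ext (u := fun k => \sum_(i <- index_enum 'I_N) iota (c i) * (A n k * iota (h i (y (k + l)))))).
    by move=> k; rewrite rmorph_sum mulr_sumr; apply: eq_bigr => i _; rewrite rmorphM mulrCA.
  by apply: sums_big => i; apply: sumsZ; have [] := Hs i.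
apply: (le_trans (ler_norm_sum _ _ _)).
apply: (@le_trans _ _ (\sum_i iota (c i) * b)); last first.
  by rewrite -mulr_suml -rmorph_sum c1 rmorph1 mul1r.
apply: ler_sum => i _; rewrite normrM iota_norm (ger0_norm (c0 i)).
by apply: ler_wpM2l; [apply: iota_ge0 | have [] := Hs i].
Qed.

Lemma fbound (f : X -> K) (Mf : K) : (forall u, `|f u| <= Mf * `|u|) ->
  forall k, `|iota (f (y k))| <= iota (`|Mf| * My).
Proof.
move=> Hf k; rewrite iota_norm; apply: iota_le.
have h := Hf (y k); have h0 : 0 <= Mf * `|y k| := le_trans (normr_ge0 _) h.
rewrite -(ger0_norm h0) normrM normr_id in h.
by apply: (le_trans h); apply: ler_wpM2l.
Qed.

Lemma choose_delta (c e : C) : 0 <= c -> 0 < e -> exists2 d : K, 0 < d & c * iota d <= e.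
Proof.
move=> c0 e0; have [h1 h2] := small_frac c0 e0.
have [d d0 hd] := iota_small h1; exists d => //.
by apply: le_trans h2; apply: ler_wpM2l.
Qed.

Lemma Sdiff_bound (f g : X -> K) n l Kt (d : C) : 0 <= d ->
  (forall k : 'I_Kt, `|iota (f (y (k + l))) - iota (g (y (k + l)))| <= d) ->
  `|\sum_(k < Kt) A n k * iota (f (y (k + l))) - \sum_(k < Kt) A n k * iota (g (y (k + l)))|
    <= Ma * d.
Proof.
move=> d0 H; rewrite -sumrB.
apply: (le_trans (ler_norm_sum _ _ _)).
apply: (@le_trans _ _ (\sum_(k < Kt) `|A n k| * d)).
  by apply: ler_sum => k _; rewrite -mulrBr normrM ler_wpM2l.
by rewrite -mulr_suml ler_wpM2r.
Qed.

Lemma tail_bound (g : X -> K) n l Kt K' : (forall u, `|g u| <= `|u|) -> (Kt <= K')%N ->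
  `|\sum_(k < K') A n k * iota (g (y (k + l))) - \sum_(k < Kt) A n k * iota (g (y (k + l)))|
   <= iota My * (\sum_(k < K') `|A n k| - \sum_(k < Kt) `|A n k|).
Proof.
move=> Hg KK; rewrite (sum_diff (fun k => A n k * iota (g (y (k + l))))) //.
rewrite (sum_diff (fun k => `|A n k|)) //.
apply: (le_trans (ler_norm_sum _ _ _)).
rewrite mulr_sumr; apply: ler_sum => k _; rewrite normrM [X in _ <= X]mulrC; apply: ler_wpM2l => //.
by rewrite iota_norm; apply: iota_le; apply: le_trans (Hg _) (Hy _).
Qed.

Lemma wstar_Cset b m S (eta : C) : 0 < eta ->
  S `<=` dual_ball X `&` Cset b m ->
  wstar_closure S `<=` Cset (b + (eta + eta + eta + eta)) m.
Proof.
move=> eta0 SC f [[lf [Mf Hf]] Happ]; split => // n mn l.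
have [sf Hsf] := @sum_exists R (A n) (fun k => iota (f (y (k + l)))) Ma _ (HA1 n)
  (fun k => fbound Hf (k + l)).
exists sf; split => //.
have [N1 HN1] := Hsf eta eta0.
have [h1 h2] := small_frac (iota_ge0 My0) eta0.
have [N2 HN2] := tail_small (HA1 n) h1.
pose Kt := maxn N1 N2.
have [d d0 hd] := choose_delta Ma0 eta0.
have [g [gS Hfg]] := Happ Kt (fun i : 'I_Kt => y (i + l)) d d0.
have [[lg Hg] [_ Cg]] := SC g gS.
have [sg [Hsg sgb]] := Cg n mn l.
have [N3 HN3] := Hsg eta eta0.
pose K' := maxn Kt N3.
pose Sf K := \sum_(k < K) A n k * iota (f (y (k + l))).
pose Sg K := \sum_(k < K) A n k * iota (g (y (k + l))).
have e1 : `|sf - Sf Kt| <= eta by rewrite distrC ltW // HN1 // leq_maxl.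
have e2 : `|Sf Kt - Sg Kt| <= eta.
  apply: le_trans hd; apply: Sdiff_bound; first by apply: iota_ge0; exact: ltW.
  move=> k; rewrite -rmorphB iota_norm; apply: iota_le; exact: ltW (Hfg k).
have e3 : `|Sg Kt - Sg K'| <= eta.
  rewrite distrC; have := tail_bound n l Hg (leq_maxl Kt N3); move/le_trans; apply.
  apply: le_trans h2; apply: ler_wpM2l; first exact: iota_ge0 My0.
  apply: (@le_trans _ _ (\sum_(k < K') `|A n k| - \sum_(k < N2) `|A n k|)).
    by rewrite lerD2l lerN2; apply: (@psum_mono _ (fun k => `|A n k|)) => //; rewrite leq_maxr.
  by apply: HN2; rewrite (leq_trans (leq_maxr N1 N2)) // leq_maxl.
have e4 : `|Sg K' - sg| <= eta by rewrite ltW // HN3 // leq_maxr.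
have -> : sf = (sf - Sf Kt) + (Sf Kt - Sg Kt) + (Sg Kt - Sg K') + (Sg K' - sg) + sg by ring.
apply: (le_trans (norm5 _ _ _ _ _)).
rewrite [b + _]addrC; do 4? apply: lerD => //.
Qed.

Lemma norm4 (x1 x2 x3 x4 : C) :
  `|x1 + x2 + x3 + x4| <= `|x1| + `|x2| + `|x3| + `|x4|.
Proof.
apply: (le_trans (ler_normD _ _)); rewrite lerD2r.
apply: (le_trans (ler_normD _ _)); rewrite lerD2r.
exact: ler_normD.
Qed.

Lemma norm_Cset b (eta : C) (f : X -> K) : 0 < eta -> dual_space X f ->
  (forall e : K, 0 < e -> exists g, (exists m, Cset b m g) /\ forall u, `|f u - g u| <= e * `|u|) ->
  exists m, Cset (b + (eta + eta + eta)) m f.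
Proof.
move=> eta0 [lf [Mf Hf]] Happ.
have c0 : 0 <= Ma * iota My by rewrite mulr_ge0 // ?Ma0 // iota_ge0 // My0.
have [d d0 hd] := choose_delta c0 eta0.
have [g [[m [lg Cg]] Hfg]] := Happ d d0.
exists m; split => // n mn l.
have [sf Hsf] := @sum_exists R (A n) (fun k => iota (f (y (k + l)))) Ma _ (HA1 n)
  (fun k => fbound Hf (k + l)).
exists sf; split => //.
have [sg [Hsg sgb]] := Cg n mn l.
have [N1 HN1] := Hsf eta eta0.
have [N3 HN3] := Hsg eta eta0.
pose Kt := maxn N1 N3.
pose Sf K := \sum_(k < K) A n k * iota (f (y (k + l))).
pose Sg K := \sum_(k < K) A n k * iota (g (y (k + l))).
have e1 : `|sf - Sf Kt| <= eta by rewrite distrC ltW // HN1 // leq_maxl.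
have e2 : `|Sf Kt - Sg Kt| <= eta.
  apply: le_trans hd; rewrite -mulrA [iota My * _]mulrC.
  apply: Sdiff_bound; first by rewrite mulr_ge0 // iota_ge0 // ?My0 // ltW.
  move=> k; rewrite -rmorphB iota_norm -rmorphM; apply: iota_le.
  apply: (le_trans (Hfg _)); apply: ler_wpM2l; [exact: ltW | exact: Hy].
have e3 : `|Sg Kt - sg| <= eta by rewrite ltW // HN3 // leq_maxr.
have -> : sf = (sf - Sf Kt) + (Sf Kt - Sg Kt) + (Sg Kt - sg) + sg by ring.
apply: (le_trans (norm4 _ _ _ _)).
rewrite [b + _]addrC; do 3? apply: lerD => //.
Qed.

Lemma union_conv b (W : nat -> set (X -> K)) :
  (forall m, W m `<=` Cset b m) ->
  forall g, conv_hull (\bigcup_m W m) g -> exists m, Cset b m g.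
Proof.
move=> WC g [N [c [h [c0 c1 hS ->]]]].
have : forall i, exists m, W m (h i) by move=> i; have [m _ Wm] := hS i; exists m.
move=> /fin_all_exists [mi Hmi].
exists (\max_(i < N) mi i).
apply: (@conv_Cset b _ (Cset b (\max_(i < N) mi i))) => //.
exists N, c, h; split => // i.
apply: (Cset_mono (le_refl b) (leq_bigmax i)); exact: WC.
Qed.

Theorem core (B : set (X -> K)) : B `<=` dual_ball X -> I_generates B ->
  (forall b, 0 < b -> forall f, B f -> exists m, Cset b m f) ->
  forall f, dual_ball X f -> forall b, 0 < b -> exists m, Cset b m f.
Proof.
move=> BB HI HB f fball b bpos.
pose b0 := b / 8%:R.
have b00 : 0 < b0 by rewrite divr_gt0 // ltr0n.
pose Bn m := B `&` Cset b0 m.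
have Beq : B = \bigcup_m Bn m.
  apply/seteqP; split => [g Bg | g [m _ [Bg _]]] //.
  by have [m Hm] := HB _ b00 g Bg; exists m.
have := HI Bn Beq => E.
have : norm_closure (conv_hull (\bigcup_n wstar_closed_conv_hull (Bn n))) f by rewrite -E.
move=> [fdual Happ].
pose b1 := b0 + (b0 + b0 + b0 + b0).
have WC : forall m, wstar_closed_conv_hull (Bn m) `<=` Cset b1 m.
  move=> m; apply: wstar_Cset => // g cg; split.
    by apply: (conv_ball (S := Bn m)) => // h [Bh _]; exact: BB.
  by apply: (conv_Cset (S := Bn m)) => // h [_ Ch].
have [m Hm] := @norm_Cset b1 b0 f b00 fdual (fun e e0 =>
  let: ex_intro g (conj hg hfg) := Happ e e0 in ex_intro _ g (conj (union_conv WC hg) hfg)).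
exists m; apply: Cset_mono Hm => //.
have -> : b1 + (b0 + b0 + b0) = b0 * 8%:R by rewrite /b1; ring.
by rewrite /b0 divfK // pnatr_eq0.
Qed.

End Core.

Lemma half_lt (F : numFieldType) (z : F) : 0 < z -> z / 2 < z.
Proof. by move=> z0; rewrite ltr_pdivrMr // mulr_natr mulr2n ltrDr. Qed.

Section Final.
Variable R : realType.
Local Notation C := R[i].
Variables (K : numFieldType) (X : normedModType K) (iota : {rmorphism K -> C}).
Hypothesis iota_norm : forall a : K, `|iota a| = iota `|a|.
Hypothesis iota_le : forall a b : K, a <= b -> iota a <= iota b.
Hypothesis iota_small : forall e : C, 0 < e -> exists2 d : K, 0 < d & iota d <= e.
Variables (A : nat -> nat -> C) (xs : nat -> X) (x : X).
Hypothesis HA2 : forall e : C, 0 < e -> exists N : nat, forall n : nat, (N <= n)%N ->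
         exists sigma : C, series_sums_to (A n) sigma /\ `|sigma - 1| < e.

Definition ydef (k : nat) : X := xs k - x.

Local Notation CS := (Cset iota A ydef).

Lemma B_good (f : X -> K) : linear_functional f ->
  FA_convergent A (fun n => iota (f (xs n))) (iota (f x)) ->
  forall b, 0 < b -> exists m, CS b m f.
Proof.
move=> lf [_ H] b b0.
have b2 : 0 < b / 2 by rewrite divr_gt0.
have [h1 h2] := small_frac (normr_ge0 (iota (f x))) b2.
have [N1 HN1] := H _ b2.
have [N2 HN2] := HA2 h1.
exists (maxn N1 N2); split => // n; rewrite geq_max => /andP[n1 n2] l.
have [s' [Hs' hs']] := HN1 n n1 l.
have [rho [Hr hr]] := HN2 n n2.
exists (s' - iota (f x) * rho); split.
  apply: sums_ext (sumsD Hs' (sumsN (sumsZ (iota (f x)) Hr))) => k.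
  by rewrite /ydef linB // rmorphB; ring.
have -> : s' - iota (f x) * rho = (s' - iota (f x)) - iota (f x) * (rho - 1) by ring.
apply: (le_trans (ler_normB _ _)); rewrite [leRHS](splitr b); apply: lerD; first exact: ltW.
apply: le_trans h2; rewrite normrM; apply: ler_wpM2l => //; exact: ltW.
Qed.

Lemma good_FA (f : X -> K) : dual_space X f -> bounded_X_seq xs ->
  (forall b, 0 < b -> exists m, CS b m f) ->
  FA_convergent A (fun n => iota (f (xs n))) (iota (f x)).
Proof.
move=> [lf [Mf Hf]] [Mx HMx] Hg; split.
  exists (iota (`|Mf| * Mx)) => n; rewrite iota_norm; apply: iota_le.
  have h := Hf (xs n); have h0 : 0 <= Mf * `|xs n| := le_trans (normr_ge0 _) h.
  rewrite -(ger0_norm h0) normrM normr_id in h.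
  by apply: (le_trans h); apply: ler_wpM2l.
move=> e e0.
have e2 : 0 < e / 2 by rewrite divr_gt0.
have e4 : 0 < e / 2 / 2 by rewrite divr_gt0.
have [h1 h2] := small_frac (normr_ge0 (iota (f x))) e2.
have [m [_ Hm]] := Hg _ e4.
have [N2 HN2] := HA2 h1.
exists (maxn m N2) => n; rewrite geq_max => /andP[n1 n2] l.
have [s [Hs hs]] := Hm n n1 l.
have [rho [Hr hr]] := HN2 n n2.
exists (s + iota (f x) * rho); split.
  apply: sums_ext (sumsD Hs (sumsZ (iota (f x)) Hr)) => k.
  by rewrite /ydef linB // rmorphB; ring.
have -> : s + iota (f x) * rho - iota (f x) = s + iota (f x) * (rho - 1) by ring.
apply: (le_lt_trans (ler_normD _ _)); rewrite [ltRHS](splitr e).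
apply: ltr_leD; first exact: le_lt_trans hs (half_lt e2).
apply: le_trans h2; rewrite normrM; apply: ler_wpM2l => //; exact: ltW.
Qed.

Lemma good_scale :
  (forall g, dual_ball X g -> forall b, 0 < b -> exists m, CS b m g) ->
  forall f, dual_space X f -> forall b, 0 < b -> exists m, CS b m f.
Proof.
move=> Hball f [lf [Mf Hf]] b b0.
pose c := `|Mf| + 1.
have c0 : 0 < c by rewrite ltr_wpDl.
pose g := fun u => c^-1 * f u.
have gball : dual_ball X g.
  split.
    by move=> a u v; rewrite /g lf mulrDr mulrCA.
  move=> u; rewrite /g normrM.
  have h := Hf u; have h0 : 0 <= Mf * `|u| := le_trans (normr_ge0 _) h.
  rewrite -(ger0_norm h0) normrM normr_id in h.
  rewrite (ger0_norm (x := c^-1)); last by rewrite invr_ge0 ltW.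
  rewrite ler_pdivrMl //.
  by apply: (le_trans h); apply: ler_wpM2r => //; rewrite lerDl.
have ic0 : 0 < iota c.
  rewrite lt0r iota_ge0 ?ltW // andbT fmorph_eq0; exact: lt0r_neq0.
have bc : 0 < b / iota c by rewrite divr_gt0.
have [m [_ Hm]] := Hball g gball _ bc.
exists m; split => // n nm l.
have [s [Hs hs]] := Hm n nm l.
exists (iota c * s); split.
  apply: sums_ext (sumsZ (iota c) Hs) => k.
  by rewrite /g mulrCA rmorphM fmorphV mulVKf // gt_eqF.
rewrite normrM (ger0_norm (ltW ic0)).
by rewrite mulrC -ler_pdivlMr.
Qed.

End Final.

Lemma gen_main (R : realType) (K : numFieldType) (X : normedModType K)
  (iota : {rmorphism K -> R[i]})
  (Hn : forall a : K, `|iota a| = iota `|a|)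
  (Hle : forall a b : K, a <= b -> iota a <= iota b)
  (Hs : forall e : R[i], 0 < e -> exists2 d : K, 0 < d & iota d <= e)
  (B : set (X -> K)) (A : nat -> nat -> R[i]) (xs : nat -> X) (x : X) :
  B `<=` dual_ball X -> I_generates B -> regular_matrix A -> bounded_X_seq xs ->
  (forall f, B f -> FA_convergent A (fun n => iota (f (xs n))) (iota (f x))) ->
  forall f, dual_space X f -> FA_convergent A (fun n => iota (f (xs n))) (iota (f x)).
Proof.
move=> BB HI [[Ma HA1] HA2 _] Hx HB f fd.
have [Mx HMx] := Hx.
pose My := Mx + `|x|.
have Hy : forall k, `|ydef xs x k| <= My.
  by move=> k; rewrite /ydef; apply: (le_trans (ler_normB _ _)); rewrite lerD2r HMx.
apply: good_FA => //.
apply: good_scale => // g gball.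
apply: (core Hn Hle Hs HA1 Hy BB HI) => // b' b'0 h Bh.
apply: B_good => //; [by have [] := BB _ Bh | exact: HB].
Qed.

Lemma part1 (R : realType) :
  (forall (X : completeNormedModType R[i]) (B : set (X -> R[i]))
          (A : nat -> nat -> R[i]) (xs : nat -> X) (x : X),
      B `<=` dual_ball X -> I_generates B -> regular_matrix A ->
      bounded_X_seq xs ->
      (forall f, B f -> FA_convergent A (fun n => f (xs n)) (f x)) ->
      forall f, dual_space X f -> FA_convergent A (fun n => f (xs n)) (f x)).
Proof.
move=> X B A xs x BB HI HA Hx HB f fd.
have := @gen_main R R[i] X idfun (fun a => erefl) (fun a b h => h)
  (fun e e0 => ex_intro2 _ _ e e0 (le_refl e)) B A xs x BB HI HA Hx HB f fd.
by [].
Qed.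

Lemma part2 (R : realType) :
  (forall (X : completeNormedModType R) (B : set (X -> R))
          (A : nat -> nat -> R[i]) (xs : nat -> X) (x : X),
      B `<=` dual_ball X -> I_generates B -> regular_matrix A ->
      bounded_X_seq xs ->
      (forall f, B f -> FA_convergent A (fun n => (f (xs n))%:C) (f x)%:C) ->
      forall f, dual_space X f -> FA_convergent A (fun n => (f (xs n))%:C) (f x)%:C).
Proof.
move=> X B A xs x BB HI HA Hx HB f fd.
apply: (@gen_main R R X (real_complex R) _ _ _ B A xs x) => //.
- exact: normC_real.
- by move=> a b; rewrite lecR.
- move=> e /gt0_real [eE e0]; exists (CRe e) => //; rewrite [leRHS]eE; exact: le_refl.
Qed.

Section Ces.
Variable R : realType.
Local Notation C := R[i].

Definition Ces : nat -> nat -> C :=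
  fun n k => if (k < n)%N then ((n%:R : R)^-1)%:C else 0.

Lemma Ces_ge0 n k : 0 <= Ces n k.
Proof. by rewrite /Ces; case: ifP => // _; rewrite ler0c invr_ge0. Qed.

Lemma ces_partial (c : nat -> R) n m : (n <= m)%N ->
  \sum_(k < m) Ces n k * (c k)%:C = ((n%:R)^-1 * \sum_(k < n) c k)%:C.
Proof.
move=> nm; rewrite -(big_mkord xpredT (fun k => Ces n k * (c k)%:C)).
rewrite (@big_cat_nat _ _ _ n 0 m _ _ (leq0n n) nm) /=.
rewrite [X in _ + X]big_nat_cond [X in _ + X]big1 ?addr0; last first.
  by move=> k /andP[/andP[nk _] _]; rewrite /Ces ltnNge nk mul0r.
rewrite big_mkord rmorphM rmorph_sum /= mulr_sumr; apply: eq_bigr => k _.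
by rewrite /Ces ltn_ord.
Qed.

Lemma arch_small (e : R) : 0 < e -> exists N : nat, forall n, (N <= n)%N -> (n%:R)^-1 < e.
Proof.
move=> e0; pose N := (Num.Def.archi_bound (e^-1)).+1.
have hb : e^-1 < (Num.Def.archi_bound (e^-1))%:R by apply: archi_boundP; rewrite invr_ge0 ltW.
exists N => n Nn.
have n0 : 0 < (n%:R : R) by rewrite ltr0n (leq_trans _ Nn).
rewrite -(invrK e) ltf_pV2 ?posrE ?invr_gt0 //.
apply: lt_le_trans hb _; rewrite ler_nat; exact: ltnW.
Qed.

Lemma Ces_regular : regular_matrix Ces.
Proof.
split.
- exists 1 => n m.
  apply: (@le_trans _ _ (\sum_(k < maxn m n) Ces n k)).
    rewrite (eq_bigr (fun k : 'I_m => Ces n k)); last by move=> k _; rewrite ger0_norm ?Ces_ge0.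
    by apply: (@psum_mono _ (Ces n)) => //; [exact: Ces_ge0 | exact: leq_maxl].
  rewrite (eq_bigr (fun k : 'I_(maxn m n) => Ces n k * (1 : R)%:C)); last by move=> k _; rewrite mulr1.
  rewrite (ces_partial (fun _ => 1)) ?leq_maxr // sumr_const card_ord -(rmorph1 (real_complex R)) lecR.
  case: n => [|n]; first by rewrite mulr0n mulr0.
  by rewrite mulVf // pnatr_eq0.
- move=> e e0; exists 1%N => n n1; exists 1; split; last by rewrite subrr normr0.
  move=> e' e'0; exists n => m nm.
  rewrite (eq_bigr (fun k : 'I_m => Ces n k * (1 : R)%:C)); last by move=> k _; rewrite mulr1.
  rewrite (ces_partial (fun _ => 1)) // sumr_const card_ord mulVf ?pnatr_eq0 -?lt0n //.
  by rewrite subrr normr0.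
- move=> k e /gt0_real [eE e0].
  have [N HN] := arch_small e0.
  exists (maxn N k.+1) => n; rewrite geq_max => /andP[Nn kn].
  rewrite /Ces kn ger0_norm ?ler0c ?invr_ge0 // [ltRHS]eE ltcR; exact: HN.
Qed.
End Ces.

Section Lorentz.
Variable R : realType.
Local Notation C := R[i].

Definition Wavg (s : nat -> R) (p l : nat) : R := (p%:R)^-1 * \sum_(k < p) s (k + l)%N.

Lemma U_to_FA (s : nat -> R) (t : R) : bounded_real_seq s ->
  (forall e : R, 0 < e -> exists N, forall n, (N <= n)%N -> forall l, `|Wavg s n l - t| < e) ->
  FA_convergent (@Ces R) (fun n => (s n)%:C) t%:C.
Proof.
move=> [M HM] HU; split.
  by exists M%:C => n; rewrite normC_real lecR.
move=> e /gt0_real [eE e0].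
have [N HN] := HU _ e0.
exists (maxn N 1) => n; rewrite geq_max => /andP[Nn n1] l.
exists (Wavg s n l)%:C; split.
  move=> e' e'0; exists n => m nm.
  by rewrite (ces_partial (fun k => s (k + l)%N)) // subrr normr0.
by rewrite -rmorphB normC_real [ltRHS]eE ltcR; exact: HN.
Qed.

Lemma FA_to_U (s : nat -> R) (t : R) :
  FA_convergent (@Ces R) (fun n => (s n)%:C) t%:C ->
  bounded_real_seq s /\
  (forall e : R, 0 < e -> exists N, forall n, (N <= n)%N -> forall l, `|Wavg s n l - t| < e).
Proof.
move=> [[M HM] H]; split.
  exists (CRe M) => n; have := Re_le (HM n); by rewrite normC_real.
move=> e e0.
have e2 : 0 < e / 2 by rewrite divr_gt0.
have e2C : 0 < (e / 2)%:C by rewrite ltcR.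
have [N HN] := H _ e2C.
exists (maxn N 1) => n; rewrite geq_max => /andP[Nn n1] l.
have [sg [Hsg hsg]] := HN n Nn l.
have [N' HN'] := Hsg _ e2C.
have := HN' (maxn n N') (leq_maxr _ _).
rewrite (ces_partial (fun k => s (k + l)%N)) ?leq_maxl // => h.
have : `|(Wavg s n l)%:C - t%:C| < (e / 2)%:C + (e / 2)%:C.
  rewrite (_ : _ - _ = ((Wavg s n l)%:C - sg) + (sg - t%:C)); last by ring.
  by apply: (le_lt_trans (ler_normD _ _)); apply: ltrD.
by rewrite -rmorphB -rmorphD normC_real ltcR -splitr.
Qed.

Section BL.
Variable L : (nat -> R) -> R.
Hypothesis HL : BanachLimit L.

Lemma bnd_const (c : R) : bounded_real_seq (fun _ : nat => c).
Proof. by exists `|c|. Qed.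

Lemma bnd_lin (a : R) (s u : nat -> R) : bounded_real_seq s -> bounded_real_seq u ->
  bounded_real_seq (fun k => a * s k + u k).
Proof.
move=> [M HM] [N HN]; exists (`|a| * M + N) => k.
apply: (le_trans (ler_normD _ _)); rewrite normrM; apply: lerD => //.
by apply: ler_wpM2l.
Qed.

Lemma bnd_shift (s : nat -> R) j : bounded_real_seq s -> bounded_real_seq (fun k => s (j + k)%N).
Proof. by move=> [M HM]; exists M. Qed.

Lemma bnd_sum (s : nat -> R) p : bounded_real_seq s -> bounded_real_seq (fun k => \sum_(j < p) s (j + k)%N).
Proof.
move=> [M HM]; exists (\sum_(j < p) M) => k.
apply: (le_trans (ler_norm_sum _ _ _)); apply: ler_sum => j _; exact: HM.
Qed.

Lemma L0 : L (fun _ => 0) = 0.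
Proof.
have [Llin _ _ _] := HL.
have := Llin 1 (fun _ => 0) (fun _ => 0) (bnd_const 0) (bnd_const 0).
have -> : (fun k : nat => 1 * (0 : R) + 0) = (fun _ => 0) by apply: funext => k; rewrite mul1r addr0.
rewrite mul1r => h; apply/esym/(@addrI _ (L (fun _ => 0))); by rewrite addr0.
Qed.

Lemma LZ a (s : nat -> R) : bounded_real_seq s -> L (fun k => a * s k) = a * L s.
Proof.
have [Llin _ _ _] := HL => bs.
have := Llin a s (fun _ => 0) bs (bnd_const 0); rewrite L0 addr0.
by have -> : (fun k => a * s k + 0) = (fun k => a * s k) by apply: funext => k; rewrite addr0.
Qed.

Lemma LD (s u : nat -> R) : bounded_real_seq s -> bounded_real_seq u ->
  L (fun k => s k + u k) = L s + L u.
Proof.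
have [Llin _ _ _] := HL => bs bu.
have := Llin 1 s u bs bu; rewrite mul1r.
by have -> : (fun k => 1 * s k + u k) = (fun k => s k + u k) by apply: funext => k; rewrite mul1r.
Qed.

Lemma Lconst c : L (fun _ => c) = c.
Proof.
have [_ L1 _ _] := HL.
transitivity (L (fun k => c * (fun _ : nat => (1:R)) k)).
  by congr L; apply: funext => k; rewrite mulr1.
rewrite LZ; last exact: bnd_const.
by rewrite -[RHS]mulr1; congr (_ * _); exact: L1.
Qed.

Lemma Lle (u v : nat -> R) : bounded_real_seq u -> bounded_real_seq v -> (forall k, u k <= v k) -> L u <= L v.
Proof.
have [Llin _ Lpos _] := HL => bu bv uv.
have := Lpos _ (bnd_lin (-1) bu bv) (fun k => _ : 0 <= -1 * u k + v k).
rewrite Llin // mulN1r addrC subr_ge0; apply.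
by move=> k; rewrite mulN1r addrC subr_ge0.
Qed.

Lemma Lshift (s : nat -> R) j : bounded_real_seq s -> L (fun k => s (j + k)%N) = L s.
Proof.
have [_ _ _ Lsh] := HL => bs; elim: j => [|j IH].
  by have -> : (fun k => s (0 + k)%N) = s by apply: funext => k; rewrite add0n.
transitivity (L (fun k => s (j + k)%N)); last exact: IH.
have -> : (fun k => s (j.+1 + k)%N) = (fun k => s (j + k.+1)%N).
  by apply: funext => k; rewrite addSnnS.
exact: (Lsh _ (bnd_shift j bs)).
Qed.

Lemma Lsum (s : nat -> R) p : bounded_real_seq s -> L (fun k => \sum_(j < p) s (j + k)%N) = p%:R * L s.
Proof.
move=> bs; elim: p => [|p IH].
  have -> : (fun k => \sum_(j < 0) s (j + k)%N) = (fun _ => 0) by apply: funext => k; rewrite big_ord0.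
  by rewrite L0 mul0r.
have -> : (fun k => \sum_(j < p.+1) s (j + k)%N) = (fun k => \sum_(j < p) s (j + k)%N + s (p + k)%N).
  by apply: funext => k; rewrite big_ord_recr.
rewrite LD; [|exact: bnd_sum|exact: bnd_shift].
by rewrite IH Lshift // -addn1 natrD mulrDl mul1r.
Qed.

Lemma Banach_U (s : nat -> R) t : bounded_real_seq s ->
  (forall e : R, 0 < e -> exists N, forall n, (N <= n)%N -> forall l, `|Wavg s n l - t| < e) ->
  L s = t.
Proof.
move=> bs HU.
have key : forall e, 0 < e -> t - e <= L s <= t + e.
  move=> e e0; have [N HN] := HU _ e0.
  pose p := maxn N 1.
  have p0 : (p%:R : R) != 0 by rewrite pnatr_eq0 -lt0n leq_maxr.
  have bw : bounded_real_seq (fun l => Wavg s p l).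
    have [M HM] := bs; exists (`|p%:R^-1| * \sum_(k < p) M) => l.
    rewrite /Wavg normrM ler_wpM2l //; apply: le_trans (ler_norm_sum _ _ _) _.
    by apply: ler_sum => k _; exact: HM.
  have Lw : L (fun l => Wavg s p l) = L s.
    have h := LZ (p%:R^-1) (bnd_sum p bs).
    rewrite Lsum // mulKf // in h; exact: h.
  rewrite -Lw; apply/andP; split.
    rewrite -{1}(Lconst (t - e)); apply: Lle; [exact: bnd_const | exact: bw | move=> k].
    by have := HN p (leq_maxl _ _) k; rewrite ltr_distl => /andP[h _]; exact: ltW.
  rewrite -{1}(Lconst (t + e)); apply: Lle; [exact: bw | exact: bnd_const | move=> k].
  by have := HN p (leq_maxl _ _) k; rewrite ltr_distl => /andP[_ h]; exact: ltW.
have [h|h|//] := ltrgtP (L s) t.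
  have e0 : 0 < (t - L s) / 2 by rewrite divr_gt0 // subr_gt0.
  have := key _ e0; have := splitr (t - L s).
  set q := (t - L s) / 2 => hq /andP[h1 h2]; lra.
have e0 : 0 < (L s - t) / 2 by rewrite divr_gt0 // subr_gt0.
have := key _ e0; have := splitr (L s - t).
set q := (L s - t) / 2 => hq /andP[h1 h2]; lra.
Qed.
End BL.
End Lorentz.

Section Ultra.
Variable R : realType.
Variable G : set_system nat.
Hypothesis UG : UltraFilter G.

Definition uP (v : nat -> R) (c : R) := forall e, 0 < e -> G [set j | `|v j - c| < e].

Lemma G_ex (P : set nat) : G P -> exists j, P j.
Proof. by move=> GP; apply: filter_ex GP. Qed.

Lemma uP_uniq v c d : uP v c -> uP v d -> c = d.
Proof.
move=> hc hd; case: (c =P d) => // /eqP cd; exfalso.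
have e0 : 0 < `|c - d| / 2 by rewrite divr_gt0 // normr_gt0 subr_eq0.
have [j [h1 h2]] := G_ex (filterI (hc _ e0) (hd _ e0)).
have h3 : `|c - d| <= `|v j - d| + `|v j - c|.
  have -> : c - d = (v j - d) - (v j - c) by ring.
  exact: ler_normB.
have := splitr `|c - d|; set q := `|c - d| / 2 => hq.
simpl in h1, h2; lra.
Qed.

Lemma uP_ext v w c : (forall j, v j = w j) -> uP v c -> uP w c.
Proof. by move=> vw h e e0; apply: filterS (h e e0) => j /=; rewrite vw. Qed.

Lemma uP_const c : uP (fun _ => c) c.
Proof. by move=> e e0; apply: filterS filterT => j _ /=; rewrite subrr normr0. Qed.

Lemma uP_lin a v w c d : uP v c -> uP w d -> uP (fun j => a * v j + w j) (a * c + d).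
Proof.
move=> hv hw e e0.
have e2 : 0 < e / 2 by rewrite divr_gt0.
have [h1 h2] := small_frac (normr_ge0 a) e2.
apply: filterS (filterI (hv _ h1) (hw _ e2)) => j [/= j1 j2].
have -> : a * v j + w j - (a * c + d) = a * (v j - c) + (w j - d) by ring.
apply: (le_lt_trans (ler_normD _ _)); rewrite normrM (splitr e).
apply: ler_ltD => //; apply: le_trans h2; apply: ler_wpM2l => //; exact: ltW.
Qed.

Definition ulim (v : nat -> R) : R := sup [set r | G [set j | r <= v j]].

Lemma ulimP v M : (forall j, `|v j| <= M) -> uP v (ulim v).
Proof.
move=> hM; pose S := [set r | G [set j | r <= v j]].
have hS : has_sup S.
  split.
    exists (- M); apply: filterS filterT => j _ /=.
    by have := hM j; rewrite ler_norml => /andP[].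
  exists M => r Sr; have [j /= hj] := G_ex Sr.
  by apply: le_trans hj _; apply: le_trans (ler_norm _) (hM j).
move=> e e0.
have [r Sr hr] := sup_adherent e0 hS.
have hup : G [set j | v j < ulim v + e].
  have [h|h] := in_ultra_setVsetC [set j | ulim v + e <= v j] UG.
    have := sup_upper_bound hS h; rewrite /ulim -/S; lra.
  by apply: filterS h => j /= /negP; rewrite -ltNge.
apply: filterS (filterI Sr hup) => j [/= h1 h2].
rewrite ltr_distl; apply/andP; split => //.
by apply: lt_le_trans h1; rewrite /ulim -/S.
Qed.
End Ultra.

Section Hard.
Variable R : realType.

Lemma Wavg_bound (u : nat -> R) M p l : (0 < p)%N -> (forall k, `|u k| <= M) ->
  `|Wavg u p l| <= M.
Proof.
move=> p0 hM; rewrite /Wavg normrM.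
have pR : 0 < (p%:R : R) by rewrite ltr0n.
rewrite ger0_norm ?invr_ge0 ?ler0n // ler_pdivrMl //.
apply: le_trans (ler_norm_sum _ _ _) _.
apply: (@le_trans _ _ (\sum_(k < p) M)); first by apply: ler_sum => k _; exact: hM.
by rewrite sumr_const card_ord mulr_natl.
Qed.

Lemma Wavg_lin (a : R) (s u : nat -> R) p l :
  Wavg (fun k => a * s k + u k) p l = a * Wavg s p l + Wavg u p l.
Proof. by rewrite /Wavg big_split /= -mulr_sumr mulrDr mulrCA. Qed.

Lemma Wavg_shift (s : nat -> R) p l :
  Wavg (fun k => s k.+1) p l - Wavg s p l = (p%:R)^-1 * (s (p + l)%N - s l).
Proof.
rewrite /Wavg -mulrBr /=; congr (_ * _).
have h1 : \sum_(k < p.+1) s (k + l)%N = s l + \sum_(k < p) s (k + l)%N.+1.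
  by rewrite big_ord_recl /=; congr (_ + _); apply: eq_bigr => i _.
have h2 : \sum_(k < p.+1) s (k + l)%N = \sum_(k < p) s (k + l)%N + s (p + l)%N.
  by rewrite big_ord_recr.
lra.
Qed.

Lemma AC_to_U (s : nat -> R) (t : R) : bounded_real_seq s ->
  (forall L, BanachLimit L -> L s = t) ->
  forall e, 0 < e -> exists N, forall n, (N <= n)%N -> forall l, `|Wavg s n l - t| < e.
Proof.
move=> bs HL e e0; apply: contrapT => hN.
have H : forall j, exists pl : nat * nat, (j < pl.1)%N /\ e <= `|Wavg s pl.1 pl.2 - t|.
  move=> j; apply: contrapT => hj; apply: hN; exists j.+1 => n jn l.
  rewrite ltNge; apply/negP => le; apply: hj; by exists (n, l).
pose pl j := proj1_sig (cid (H j)).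
have Hpl j : (j < (pl j).1)%N /\ e <= `|Wavg s (pl j).1 (pl j).2 - t| := proj2_sig (cid (H j)).
have [G [UG sG]] : exists G : set_system nat, UltraFilter G /\ (\oo : set_system nat) `<=` G.
  exact: ultraFilterLemma.
pose Wj (u : nat -> R) j := Wavg u (pl j).1 (pl j).2.
have p0 j : (0 < (pl j).1)%N by have [h _] := Hpl j; exact: leq_ltn_trans h.
have Wb u M : (forall k, `|u k| <= M) -> forall j, `|Wj u j| <= M.
  by move=> hM j; apply: Wavg_bound.
pose L u := ulim G (Wj u).
have LP u : bounded_real_seq u -> uP G (Wj u) (L u).
  by move=> [M hM]; apply: (ulimP UG (Wb _ _ hM)).
have BL : BanachLimit L.
  split.
  - move=> a s1 u1 b1 b2.
    apply: (uP_uniq UG (LP _ (bnd_lin a b1 b2))).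
    apply: (uP_ext UG _ (uP_lin UG a (LP _ b1) (LP _ b2))) => j.
    by rewrite /Wj Wavg_lin.
  - apply: esym; apply: (uP_uniq UG (uP_const UG 1)).
    apply: (uP_ext UG _ (LP _ (bnd_const 1))) => j.
    rewrite /Wj /Wavg sumr_const card_ord -[_ *+ _]/(_%:R) mulVf //.
    by rewrite pnatr_eq0 -lt0n.
  - move=> u bu u0; rewrite leNgt; apply/negP => Lu.
    have e1 : 0 < - L u by rewrite oppr_gt0.
    have [j /= hj] := G_ex UG (LP _ bu _ e1).
    have : 0 <= Wj u j by rewrite /Wj /Wavg mulr_ge0 ?invr_ge0 ?ler0n ?sumr_ge0.
    move: hj; rewrite ltr_distl => /andP[_ h]; lra.
  - move=> u [M hM].
    have M0 : 0 <= M := le_trans (normr_ge0 _) (hM 0%N).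
    apply: (uP_uniq UG (LP _ _)); first by exists M.
    move=> eps eps0.
    have e2 : 0 < eps / 2 by rewrite divr_gt0.
    have K0 : 0 < M + M + 1 by rewrite ltr_wpDl // addr_ge0.
    have [N HN] := arch_small (divr_gt0 e2 K0).
    apply: filterS (filterI (LP _ (ex_intro _ M hM) _ e2) (sG _ (nbhs_infty_ge N))).
    move=> j [/= h1 h2].
    have -> : Wj (fun k => u k.+1) j - L u =
      (Wj (fun k => u k.+1) j - Wj u j) + (Wj u j - L u) by ring.
    apply: (le_lt_trans (ler_normD _ _)); rewrite (splitr eps); apply: ler_ltD => //.
    rewrite /Wj Wavg_shift normrM ger0_norm ?invr_ge0 ?ler0n //.
    have hp := HN _ (leq_trans h2 (ltnW (proj1 (Hpl j)))).
    have hd : `|u ((pl j).1 + (pl j).2)%N - u (pl j).2| <= M + M + 1.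
      have := hM ((pl j).1 + (pl j).2)%N; have := hM (pl j).2.
      have := ler_normB (u ((pl j).1 + (pl j).2)%N) (u (pl j).2); lra.
    have pR' : 0 < ((pl j).1%:R : R)^-1 by rewrite invr_gt0 ltr0n.
    have h3 := ler_wpM2l (ltW pR') hd.
    rewrite ltr_pdivlMr // in hp.
    exact: le_trans h3 (ltW hp).
have Ls := HL L BL.
have [j /= hj] := G_ex UG (LP _ bs _ e0).
have [_ hj2] := Hpl j.
rewrite Ls in hj; rewrite /Wj in hj; lra.
Qed.
End Hard.

Lemma part3 (R : realType) :
  (forall (X : completeNormedModType R) (B : set (X -> R))
          (xs : nat -> X) (x : X),
      B `<=` dual_ball X -> I_generates B -> bounded_X_seq xs ->
      (forall f, B f -> almost_convergent (fun n => f (xs n)) (f x)) ->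
      forall f, dual_space X f -> almost_convergent (fun n => f (xs n)) (f x)).
Proof.
move=> X B xs x BB HI Hx HB f fd.
have HB' : forall g, B g ->
    FA_convergent (@Ces R) (fun n => (g (xs n))%:C) (g x)%:C.
  move=> g Bg; have [bg hg] := HB g Bg.
  by apply: U_to_FA => //; exact: AC_to_U.
have FA := @part2 R X B (@Ces R) xs x BB HI (@Ces_regular R) Hx HB' f fd.
have [bs U] := FA_to_U FA.
split => // L BL; exact: (Banach_U BL bs U).
Qed.

Unset Implicit Arguments.

Theorem corollary3p6 (R : realType) :
  (* complex Banach spaces *)
  (forall (X : completeNormedModType R[i]) (B : set (X -> R[i]))
          (A : nat -> nat -> R[i]) (xs : nat -> X) (x : X),
      B `<=` dual_ball X -> I_generates B -> regular_matrix A ->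
      bounded_X_seq xs ->
      (forall f, B f -> FA_convergent A (fun n => f (xs n)) (f x)) ->
      forall f, dual_space X f -> FA_convergent A (fun n => f (xs n)) (f x))
  /\
  (* real Banach spaces (scalars viewed in C, A complex) *)
  (forall (X : completeNormedModType R) (B : set (X -> R))
          (A : nat -> nat -> R[i]) (xs : nat -> X) (x : X),
      B `<=` dual_ball X -> I_generates B -> regular_matrix A ->
      bounded_X_seq xs ->
      (forall f, B f -> FA_convergent A (fun n => (f (xs n))%:C) (f x)%:C) ->
      forall f, dual_space X f -> FA_convergent A (fun n => (f (xs n))%:C) (f x)%:C)
  /\
  (* in particular: almost convergence, real Banach spaces *)
  (forall (X : completeNormedModType R) (B : set (X -> R))
          (xs : nat -> X) (x : X),
      B `<=` dual_ball X -> I_generates B -> bounded_X_seq xs ->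
      (forall f, B f -> almost_convergent (fun n => f (xs n)) (f x)) ->
      forall f, dual_space X f -> almost_convergent (fun n => f (xs n)) (f x)).
Proof.
split; first exact: part1.
split; first exact: part2.
exact: part3.
Qed.
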